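(* Let $\mathcal C$ be a two-sided quaternionic Hilbert space whose inner product satisfies $\langle c,qd\rangle_{\mathcal C}=\langle \overline{q}c,d\rangle_{\mathcal C}$ for all $c,d\in\mathcal C$ and $q\in\mathbb H$. Let $0<r<r_0<1$ and $R=1/r$, and let $\Phi(p)=\sum_{u=0}^\infty p^u\Phi_u$ ($\Phi_u\in\mathbf L(\mathcal C,\mathcal C)$) be an $\mathbf L(\mathcal C,\mathcal C)$-valued left slice hyperholomorphic function in the ball $\mathbb B_{r_0}=\{p\in\mathbb H:|p|<r_0\}$, continuous on $\{|p|\le r_0\}$ in the operator topology. For $\mathbf f=(f_v)_{v\ge1}$ and $\mathbf g=(g_u)_{u\ge1}$ in $\ell_{2,r}(\mathbb N,\mathcal C)$ define \[ [\mathbf f,\mathbf g]_\Phi=\sum_{v=1}^\infty\sum_{u=1}^v \langle \Phi_{v-u}f_v,g_u\rangle_{\mathcal C}+\sum_{u=1}^\infty\sum_{v=1}^u \langle \Phi^*_{u-v}f_v,g_u\rangle_{\mathcal C}. \] Then the form $[\cdot,\cdot]_\Phi$ is jointly continuous on $\ell_{2,r}(\mathbb N,\mathcal C)\times \ell_{2,r}(\mathbb N,\mathcal C)$.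
   Context: $\mathbb H$ denotes the real quaternions. $\ell_{2,r}(\mathbb N,\mathcal C)$ is the space of sequences $\mathbf f=(f_1,f_2,\ldots)$ with $f_u\in\mathcal C$ and $\sum_{u=1}^\infty R^{2u}\|f_u\|_{\mathcal C}^2<\infty$, with norm $\|\mathbf f\|^2=\sum_{u\ge1}R^{2u}\|f_u\|^2_{\mathcal C}$. A function $f$ on an axially symmetric open set $\Omega\subset\mathbb H$ with values in a two-sided quaternionic Banach space is left slice hyperholomorphic if $f(x+Iy)=\alpha(x,y)+I\beta(x,y)$ for all $I$ in the unit sphere $\mathbb S$ of purely imaginary quaternions, where $\alpha,\beta$ are real differentiable, satisfy $\partial_x\alpha-\partial_y\beta=0$, $\partial_y\alpha+\partial_x\beta=0$, and $\alpha(x,-y)=\alpha(x,y)$, $\beta(x,-y)=-\beta(x,y)$; on a ball centered at $0$ this is equivalent to having a convergent expansion $\sum_u p^u\Phi_u$. *)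

(* Defs.v *)
From HB Require Import structures.
From mathcomp Require Import all_boot all_order all_algebra.
From mathcomp Require Import all_classical all_reals all_analysis.
Set Implicit Arguments. Unset Strict Implicit. Unset Printing Implicit Defensive.
Import Order.TTheory GRing.Theory Num.Theory.
Import numFieldNormedType.Exports.
Local Open Scope ring_scope.

(** * Real quaternions, represented as row vectors (a0, a1, a2, a3)
    meaning a0 + a1 i + a2 j + a3 k; addition is the vector addition. *)
Notation quat R := ('rV[R]_4).

Section Quaternions.
Variable R : realType.

Definition qc (q : quat R) (k : nat) : R := q ord0 (inord k).
Definition mkq (a b c d : R) : quat R := \row_(j < 4) nth 0 [:: a; b; c; d] j.
Definition qreal (x : R) : quat R := mkq x 0 0 0.
Definition qone : quat R := qreal 1.
Definition qmul (p q : quat R) : quat R :=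
  mkq (qc p 0 * qc q 0 - qc p 1 * qc q 1 - qc p 2 * qc q 2 - qc p 3 * qc q 3)
      (qc p 0 * qc q 1 + qc p 1 * qc q 0 + qc p 2 * qc q 3 - qc p 3 * qc q 2)
      (qc p 0 * qc q 2 - qc p 1 * qc q 3 + qc p 2 * qc q 0 + qc p 3 * qc q 1)
      (qc p 0 * qc q 3 + qc p 1 * qc q 2 - qc p 2 * qc q 1 + qc p 3 * qc q 0).
Definition qconj (q : quat R) : quat R := mkq (qc q 0) (- qc q 1) (- qc q 2) (- qc q 3).
Definition qabs (q : quat R) : R :=
  Num.sqrt (qc q 0 ^+ 2 + qc q 1 ^+ 2 + qc q 2 ^+ 2 + qc q 3 ^+ 2).
Fixpoint qpow (p : quat R) (n : nat) : quat R :=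
  if n is m.+1 then qmul p (qpow p m) else qone.
End Quaternions.

(** Inner product convention: right linear in the first argument,
    <c p, d> = <c, d> p, hermitian <d, c> = conj <c, d>,
    hence <c, d q> = conj q <c, d>; positive definite; complete. *)
Record qhilbert (R : realType) := QHilbert {
  qh_car :> zmodType;
  qh_lact : quat R -> qh_car -> qh_car;
  qh_ract : qh_car -> quat R -> qh_car;
  qh_ip : qh_car -> qh_car -> quat R;
  qh_lactDr : forall q c d, qh_lact q (c + d) = qh_lact q c + qh_lact q d;
  qh_lactDl : forall p q c, qh_lact (p + q) c = qh_lact p c + qh_lact q c;
  qh_lactM : forall p q c, qh_lact (qmul p q) c = qh_lact p (qh_lact q c);
  qh_lact1 : forall c, qh_lact (qone R) c = c;
  qh_ractDl : forall q c d, qh_ract (c + d) q = qh_ract c q + qh_ract d q;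
  qh_ractDr : forall p q c, qh_ract c (p + q) = qh_ract c p + qh_ract c q;
  qh_ractM : forall p q c, qh_ract c (qmul p q) = qh_ract (qh_ract c p) q;
  qh_ract1 : forall c, qh_ract c (qone R) = c;
  qh_lract : forall p q c, qh_ract (qh_lact p c) q = qh_lact p (qh_ract c q);
  qh_real_central : forall (x : R) c, qh_lact (qreal x) c = qh_ract c (qreal x);
  qh_ipDl : forall c c' d, qh_ip (c + c') d = qh_ip c d + qh_ip c' d;
  qh_ipZl : forall c d p, qh_ip (qh_ract c p) d = qmul (qh_ip c d) p;
  qh_ip_herm : forall c d, qh_ip d c = qconj (qh_ip c d);
  qh_ip_real : forall c, qh_ip c c = qreal (qc (qh_ip c c) 0);
  qh_ip_pos : forall c, c != 0 -> 0 < qc (qh_ip c c) 0;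
  qh_complete : forall s : nat -> qh_car,
    (forall e : R, 0 < e -> exists N : nat, forall m n : nat, (N <= m)%N -> (N <= n)%N ->
       Num.sqrt (qc (qh_ip (s m - s n) (s m - s n)) 0) < e) ->
    exists l : qh_car, forall e : R, 0 < e -> exists N : nat, forall n : nat, (N <= n)%N ->
       Num.sqrt (qc (qh_ip (s n - l) (s n - l)) 0) < e
}.

Section QHilbertDefs.
Variables (R : realType) (C : qhilbert R).

Definition qhnorm (c : C) : R := Num.sqrt (qc (qh_ip c c) 0).

Definition is_qop (A : C -> C) : Prop :=
  (forall (c d : C) (p : quat R), A (qh_ract c p + d) = qh_ract (A c) p + A d) /\
  exists K : R, forall c : C, qhnorm (A c) <= K * qhnorm c.

Definition op_close (A B : C -> C) (e : R) : Prop :=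
  forall c : C, qhnorm (A c - B c) <= e * qhnorm c.

Definition qpseries_partial (Phic : nat -> C -> C) (p : quat R) (n : nat) : C -> C :=
  fun c => \sum_(u < n) qh_lact (qpow p u) (Phic u c).

(** ell_{2,r}(N, C): sequences indexed from 1 (index 0 is ignored) *)
Definition l2r_partial (r : R) (f : nat -> C) (n : nat) : R :=
  \sum_(1 <= u < n) r^-1 ^+ (2 * u) * qhnorm (f u) ^+ 2.
Definition l2r_mem (r : R) (f : nat -> C) : Prop := cvgn (l2r_partial r f).
Definition l2r_norm (r : R) (f : nat -> C) : R := Num.sqrt (limn (l2r_partial r f)).

Definition form_partial1 (Phic : nat -> C -> C) (f g : nat -> C) (n : nat) : quat R :=
  \sum_(1 <= v < n) \sum_(1 <= u < v.+1) qh_ip (Phic (v - u)%N (f v)) (g u).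
Definition form_partial2 (Phis : nat -> C -> C) (f g : nat -> C) (n : nat) : quat R :=
  \sum_(1 <= u < n) \sum_(1 <= v < u.+1) qh_ip (Phis (u - v)%N (f v)) (g u).
Definition qform (Phic Phis : nat -> C -> C) (f g : nat -> C) : quat R :=
  limn (form_partial1 Phic f g) + limn (form_partial2 Phis f g).
End QHilbertDefs.

(* Main.v *)
Require Import Defs.
From HB Require Import structures.
From mathcomp Require Import all_boot all_order all_algebra.
From mathcomp Require Import all_classical all_reals all_analysis.
From mathcomp Require Import ring lra.
Import Order.TTheory GRing.Theory Num.Theory.
Import numFieldNormedType.Exports.
Local Open Scope ring_scope.
Set Implicit Arguments. Unset Strict Implicit. Unset Printing Implicit Defensive.

HB.instance Definition _ (R : realType) :=
  Uniform_isComplete.Build 'M[R]_(1,4) (@mx_complete R 1 4).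

Section Quat.
Variable R : realType.
Implicit Types p q : quat R.

Lemma qcE0 (a b c d : R) : qc (mkq a b c d) 0 = a.
Proof. by rewrite /qc /mkq mxE inordK. Qed.
Lemma qcE1 (a b c d : R) : qc (mkq a b c d) 1 = b.
Proof. by rewrite /qc /mkq mxE inordK. Qed.
Lemma qcE2 (a b c d : R) : qc (mkq a b c d) 2 = c.
Proof. by rewrite /qc /mkq mxE inordK. Qed.
Lemma qcE3 (a b c d : R) : qc (mkq a b c d) 3 = d.
Proof. by rewrite /qc /mkq mxE inordK. Qed.
Definition qcE := (qcE0, qcE1, qcE2, qcE3).

Lemma qcD p q k : qc (p + q) k = qc p k + qc q k.
Proof. by rewrite /qc mxE. Qed.
Lemma qcN p k : qc (- p) k = - qc p k.
Proof. by rewrite /qc mxE. Qed.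
Lemma qc0 k : qc (0 : quat R) k = 0.
Proof. by rewrite /qc mxE. Qed.

Lemma quatP p q : (forall k, (k < 4)%N -> qc p k = qc q k) -> p = q.
Proof.
move=> H; apply/rowP => j; have := H j (ltn_ord j).
by rewrite /qc inord_val.
Qed.

Lemma qconjD p q : qconj (p + q) = qconj p + qconj q.
Proof.
apply: quatP => k; rewrite qcD /qconj.
by case: k => [|[|[|[|]]]] //= _; rewrite !qcE !qcD; lra.
Qed.
Lemma qconjN p : qconj (- p) = - qconj p.
Proof.
apply: quatP => k; rewrite qcN /qconj.
by case: k => [|[|[|[|]]]] //= _; rewrite !qcE !qcN.
Qed.

Lemma qmul_real a b : qmul (qreal a) (qreal b) = qreal (a * b) :> quat R.
Proof.
apply: quatP => k; rewrite /qmul /qreal.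
by case: k => [|[|[|[|]]]] //= _; rewrite !qcE; ring.
Qed.

Lemma qpow_real a n : qpow (qreal a) n = qreal (a ^+ n) :> quat R.
Proof.
elim: n => [|n IH] /=; first by rewrite expr0.
by rewrite IH qmul_real exprS.
Qed.

Lemma qabs_real a : qabs (qreal a) = `|a| :> R.
Proof.
rewrite /qabs /qreal !qcE expr0n /= !addr0; exact: sqrtr_sqr.
Qed.

Lemma qc_norm p k : (k < 4)%N -> `|qc p k| <= `|p|.
Proof.
move=> hk; rewrite /qc [X in _ <= X]mx_normrE.
exact: (le_bigmax _ (fun ij : 'I_1 * 'I_4 => `|p ij.1 ij.2|) (ord0, inord k)).
Qed.

Lemma norm_qc_le p B : 0 <= B -> (forall k, (k < 4)%N -> `|qc p k| <= B) -> `|p| <= B.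
Proof.
move=> B0 H; rewrite [X in X <= _]mx_normrE.
apply: bigmax_le => // -[i j] _ /=.
have := H j (ltn_ord j); rewrite /qc inord_val.
by rewrite (ord1 i).
Qed.

Lemma qabs_le p : qabs p <= 2 * `|p|.
Proof.
rewrite /qabs.
have n0 : 0 <= `|p| by [].
rewrite -(@ger0_norm _ (2 * `|p|)); last by rewrite mulr_ge0.
rewrite -sqrtr_sqr ler_sqrt; last by rewrite sqr_ge0.
have h : forall k, (k < 4)%N -> qc p k ^+ 2 <= `|p| ^+ 2.
  move=> k hk; rewrite -real_normK ?num_real //.
  by rewrite lerXn2r ?nnegrE ?qc_norm.
have := h 0%N isT; have := h 1%N isT; have := h 2%N isT; have := h 3%N isT.
rewrite exprMn; lra.
Qed.

Lemma qconj_norm p : `|qconj p| = `|p|.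
Proof.
apply/eqP; rewrite eq_le; apply/andP; split; apply: norm_qc_le => // k hk.
  case: k hk => [|[|[|[|]]]] // _; rewrite /qconj !qcE ?normrN; exact: qc_norm.
case: k hk => [|[|[|[|]]]] // _;
  [have := (qc_norm (qconj p) (k:=0%N) isT)
  |have := (qc_norm (qconj p) (k:=1%N) isT)|have := (qc_norm (qconj p) (k:=2%N) isT)
  |have := (qc_norm (qconj p) (k:=3%N) isT)]; by rewrite /qconj !qcE ?normrN.
Qed.

End Quat.

Section Hil.
Variables (R : realType) (C : qhilbert R).
Implicit Types x y z : C.
Local Notation ip := (@qh_ip R C).
Local Notation ra := (@qh_ract R C).
Definition NN x : R := qc (ip x x) 0.

Lemma ip0l y : ip 0 y = 0.
Proof.
have h := qh_ipDl (0 : C) 0 y; rewrite addr0 in h.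
by move: h; rewrite -{1}(addr0 (ip 0 y)) => /addrI <-.
Qed.

Lemma ipNl x y : ip (- x) y = - ip x y.
Proof. by apply/eqP; rewrite -addr_eq0 -qh_ipDl addNr ip0l. Qed.

Lemma ipBl x x' y : ip (x - x') y = ip x y - ip x' y.
Proof. by rewrite qh_ipDl ipNl. Qed.

Lemma ipC x y : ip x y = qconj (ip y x).
Proof. exact: qh_ip_herm. Qed.

Lemma ipDr x y z : ip x (y + z) = ip x y + ip x z.
Proof. by rewrite ipC qh_ipDl qconjD -!ipC. Qed.

Lemma ipNr x y : ip x (- y) = - ip x y.
Proof. by rewrite ipC ipNl qconjN -ipC. Qed.

Lemma ipBr x y z : ip x (y - z) = ip x y - ip x z.
Proof. by rewrite ipDr ipNr. Qed.

Lemma ip0r x : ip x 0 = 0.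
Proof. by rewrite ipC ip0l; apply: quatP => k; rewrite /qconj; case: k => [|[|[|[|]]]] //= _; rewrite !qcE qc0 ?oppr0. Qed.

Lemma NN_ge0 x : 0 <= NN x.
Proof.
have [->|/qh_ip_pos/ltW//] := eqVneq x 0.
by rewrite /NN ip0l qc0.
Qed.

Lemma NN_eq0 x : NN x = 0 -> x = 0.
Proof. by move=> h; case: (eqVneq x 0) => // /qh_ip_pos; rewrite -/(NN x) h ltxx. Qed.

Lemma qhnorm_sqr x : qhnorm x ^+ 2 = NN x.
Proof. by rewrite /qhnorm sqr_sqrtr // NN_ge0. Qed.

Lemma qhnorm_ge0 x : 0 <= qhnorm x.
Proof. exact: sqrtr_ge0. Qed.

Lemma qc_conj0 (q : quat R) : qc (qconj q) 0 = qc q 0.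
Proof. by rewrite /qconj qcE. Qed.

Lemma NND x y : NN (x + y) = NN x + NN y + 2 * qc (ip x y) 0.
Proof.
rewrite /NN qh_ipDl !ipDr !qcD (ipC y x) qc_conj0; lra.
Qed.

Lemma NNB x y : NN (x - y) = NN x + NN y - 2 * qc (ip x y) 0.
Proof.
rewrite /NN ipBl !ipBr (ipC y x) !(qcD, qcN) qc_conj0; lra.
Qed.

Lemma NNN x : NN (- x) = NN x.
Proof. by rewrite /NN ipNl ipNr opprK. Qed.

Lemma qhnormN x : qhnorm (- x) = qhnorm x.
Proof. by rewrite /qhnorm -/(NN _) NNN. Qed.

Lemma parallel x y : NN (x - y) <= 2 * NN x + 2 * NN y.
Proof. have := NN_ge0 (x + y); rewrite NND NNB; lra. Qed.

Lemma ipZl_real x y t : qc (ip (ra x (qreal t)) y) 0 = t * qc (ip x y) 0.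
Proof. by rewrite qh_ipZl /qmul /qreal !qcE; ring. Qed.

Lemma NNZ x t : NN (ra x (qreal t)) = t ^+ 2 * NN x.
Proof.
rewrite /NN ipZl_real ipC qc_conj0 ipZl_real; ring.
Qed.

Lemma qhnormZ x t : qhnorm (ra x (qreal t)) = `|t| * qhnorm x.
Proof. by rewrite /qhnorm -!/(NN _) NNZ sqrtrM ?sqr_ge0 // sqrtr_sqr. Qed.

Definition qe (k : nat) : quat R :=
  match k with 1 => mkq 0 1 0 0 | 2 => mkq 0 0 1 0 | _ => mkq 0 0 0 1 end.

Lemma ip_qe x y k : (0 < k < 4)%N -> qc (ip (ra x (qe k)) y) 0 = - qc (ip x y) k.
Proof.
by rewrite qh_ipZl; case: k => [|[|[|[|]]]] // _; rewrite /qmul /qe !qcE; ring.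
Qed.

Lemma NN_qe x k : (0 < k < 4)%N -> NN (ra x (qe k)) = NN x.
Proof.
move=> hk; rewrite /NN qh_ipZl ipC qh_ipZl qh_ip_real -/(NN x).
by case: k hk => [|[|[|[|]]]] // _; rewrite /qmul /qconj /qreal /qe !qcE; ring.
Qed.

Lemma CS0 x y : `|qc (ip x y) 0| <= qhnorm x * qhnorm y.
Proof.
have [->|nx] := eqVneq x 0; first by rewrite ip0l qc0 normr0 mulr_ge0 ?qhnorm_ge0.
have [->|ny] := eqVneq y 0; first by rewrite ip0r qc0 normr0 mulr_ge0 ?qhnorm_ge0.
have ha : 0 < qhnorm x.
  by rewrite lt_neqAle qhnorm_ge0 andbT eq_sym /qhnorm sqrtr_eq0 -ltNge qh_ip_pos.
have hb : 0 < qhnorm y.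
  by rewrite lt_neqAle qhnorm_ge0 andbT eq_sym /qhnorm sqrtr_eq0 -ltNge qh_ip_pos.
set a := qhnorm x in ha *; set b := qhnorm y in hb *.
set t := b / a.
have t0 : 0 < t by rewrite divr_gt0.
have ta : t * a = b by rewrite /t divfK // gt_eqF.
set c := qc (ip x y) 0.
have H1 := NN_ge0 (ra x (qreal t) + y).
have H2 := NN_ge0 (ra x (qreal t) - y).
rewrite NND NNZ ipZl_real -!qhnorm_sqr -/a -/b -/c in H1.
rewrite NNB NNZ ipZl_real -!qhnorm_sqr -/a -/b -/c in H2.
have e1 : t ^+ 2 * a ^+ 2 + b ^+ 2 + 2 * (t * c) = 2 * t * (a * b + c).
  by rewrite -ta; ring.
have e2 : t ^+ 2 * a ^+ 2 + b ^+ 2 - 2 * (t * c) = 2 * t * (a * b - c).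
  by rewrite -ta; ring.
have ai : 0 < a^-1 by rewrite invr_gt0.
rewrite e1 pmulr_rge0 ?mulr_gt0 // in H1.
rewrite e2 pmulr_rge0 ?mulr_gt0 // in H2.
rewrite ler_norml; apply/andP; split; lra.
Qed.

Lemma CSk x y k : (k < 4)%N -> `|qc (ip x y) k| <= qhnorm x * qhnorm y.
Proof.
case: k => [|k] hk; first exact: CS0.
have hk' : (0 < k.+1 < 4)%N by [].
rewrite -normrN -ip_qe //.
have := CS0 (ra x (qe k.+1)) y.
by rewrite /qhnorm -!/(NN _) NN_qe.
Qed.

Lemma CS x y : `|ip x y| <= qhnorm x * qhnorm y.
Proof. apply: norm_qc_le; [by rewrite mulr_ge0 ?qhnorm_ge0|exact: CSk]. Qed.

End Hil.

Section Ser.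
Variable R : realType.

Lemma dseries (h : nat -> quat R) (A q : R) : 0 <= A -> 0 < q -> q < 1 ->
  (forall v, (1 <= v)%N -> `|h v| <= A * q ^+ v) ->
  cvgn (fun n => \sum_(1 <= v < n) h v) /\
  `|limn (fun n => \sum_(1 <= v < n) h v)| <= A / (1 - q).
Proof.
move=> A0 q0 q1 hb.
pose h' v := if v is 0 then 0 else h v.
have -> : (fun n => \sum_(1 <= v < n) h v) = series h'.
  apply/funext => -[|n]; rewrite /series /=.
    by rewrite !big_geq.
  rewrite [RHS]big_ltn // /= add0r; apply: eq_big_nat => -[|i] //.
have hb' : forall v, `|h' v| <= geometric A q v.
  case=> [|v] /=; first by rewrite normr0 expr0 mulr1.
  exact: hb.
have qn : `|q| < 1 by rewrite gtr0_norm.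
have cn : cvgn [normed series h'].
  apply: (series_le_cvg _ _ hb') => //.
    by move=> n; rewrite geometric_ge0 // ltW.
  exact: is_cvg_geometric_series.
split; first exact: normed_cvg.
apply: le_trans (lim_series_norm cn) _.
rewrite -(cvg_lim _ (@cvg_geometric_series _ A _ qn)) //.
apply: lim_series_le => //; exact: is_cvg_geometric_series.
Qed.

Lemma geo_partial (r : R) v : 0 < r -> r < 1 ->
  \sum_(1 <= u < v.+1) r ^+ u <= r / (1 - r).
Proof.
move=> r0 r1; rewrite -add1n geometric_partial_tail expr1.
apply: geometric_le_lim => //; [exact: ltW | by rewrite gtr0_norm].
Qed.

Lemma rowseries (T : nat -> nat -> quat R) (A q r : R) : 0 <= A -> 0 < q -> q < 1 ->
  0 < r -> r < 1 ->
  (forall v u, (1 <= u)%N -> (u <= v)%N -> `|T v u| <= A * q ^+ v * r ^+ u) ->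
  cvgn (fun n => \sum_(1 <= v < n) \sum_(1 <= u < v.+1) T v u) /\
  `|limn (fun n => \sum_(1 <= v < n) \sum_(1 <= u < v.+1) T v u)|
     <= A * (r / (1 - r)) / (1 - q).
Proof.
move=> A0 q0 q1 r0 r1 hT.
apply: dseries => //.
  by rewrite mulr_ge0 // divr_ge0 ?ltW // subr_gt0.
move=> v v1.
apply: le_trans (ler_norm_sum _ _ _) _.
apply: (@le_trans _ _ (\sum_(1 <= u < v.+1) A * q ^+ v * r ^+ u)).
  rewrite !big_nat; apply: ler_sum => u /andP[u1 uv]; exact: hT.
under eq_bigr do rewrite -mulrA.
rewrite -!big_distrr /= -[X in _ <= X]mulrA ler_wpM2l //.
rewrite [X in X <= _]mulrC ler_wpM2r //; first by rewrite exprn_ge0 // ltW.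
exact: geo_partial.
Qed.

End Ser.

Section L2.
Variables (R : realType) (C : qhilbert R).
Implicit Types f g : nat -> C.

Lemma l2r_term_ge0 (r : R) f u : 0 <= r^-1 ^+ (2 * u) * qhnorm (f u) ^+ 2.
Proof. by rewrite mulr_ge0 ?sqr_ge0 // exprM exprn_ge0 // sqr_ge0. Qed.

Lemma l2r_nd (r : R) f : {homo l2r_partial r f : n m / (n <= m)%N >-> n <= m}.
Proof. by apply: nondecreasing_series => n _ _; exact: l2r_term_ge0. Qed.

Lemma l2r_partial_ge0 (r : R) f n : 0 <= l2r_partial r f n.
Proof. by apply: sumr_ge0 => u _; exact: l2r_term_ge0. Qed.

Lemma l2r_lim_ge0 (r : R) f : l2r_mem r f -> 0 <= limn (l2r_partial r f).
Proof.
move=> hf; apply: le_trans (l2r_partial_ge0 r f 0) _.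
exact: nondecreasing_cvgn_le (l2r_nd r f) hf 0.
Qed.

Lemma l2r_norm_ge0 (r : R) f : 0 <= l2r_norm r f.
Proof. exact: sqrtr_ge0. Qed.

Lemma l2r_pt (r : R) f : 0 < r -> l2r_mem r f -> forall v, (1 <= v)%N ->
  qhnorm (f v) <= l2r_norm r f * r ^+ v.
Proof.
move=> r0 hf v v1.
set L := limn (l2r_partial r f).
have hL : 0 <= L by exact: l2r_lim_ge0.
have ht : r^-1 ^+ (2 * v) * qhnorm (f v) ^+ 2 <= L.
  apply: le_trans (nondecreasing_cvgn_le (l2r_nd r f) hf v.+1).
  rewrite /l2r_partial big_nat_recr //= lerDr.
  by apply: sumr_ge0 => u _; exact: l2r_term_ge0.
have e : qhnorm (f v) ^+ 2 = r ^+ (2 * v) * (r^-1 ^+ (2 * v) * qhnorm (f v) ^+ 2).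
  by rewrite mulrA -exprMn mulfV ?gt_eqF // expr1n mul1r.
have h2 : qhnorm (f v) ^+ 2 <= r ^+ (2 * v) * L.
  by rewrite e ler_wpM2l // exprn_ge0 // ltW.
rewrite -(@ger0_norm _ (qhnorm (f v))) ?qhnorm_ge0 // -sqrtr_sqr.
rewrite /l2r_norm -/L mulrC -(@ger0_norm _ (r ^+ v)); last by rewrite exprn_ge0 // ltW.
rewrite -sqrtr_sqr -sqrtrM ?sqr_ge0 // ler_sqrt; last by rewrite mulr_ge0 ?sqr_ge0.
by rewrite -exprM mulnC.
Qed.

Lemma l2r_sub (r : R) f f0 : l2r_mem r f -> l2r_mem r f0 ->
  l2r_mem r (fun u => f u - f0 u).
Proof.
move=> hf hf0; apply: nondecreasing_is_cvgn; first exact: l2r_nd.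
exists (2 * limn (l2r_partial r f) + 2 * limn (l2r_partial r f0)) => _ [n _ <-].
apply: (@le_trans _ _ (2 * l2r_partial r f n + 2 * l2r_partial r f0 n)); last first.
  apply: lerD; rewrite ler_wpM2l //; [exact: (nondecreasing_cvgn_le (l2r_nd r f) hf) | exact: (nondecreasing_cvgn_le (l2r_nd r f0) hf0)].
rewrite /l2r_partial !mulr_sumr -big_split /=.
rewrite !big_nat; apply: ler_sum => u _.
rewrite !qhnorm_sqr !(mulrCA 2) -mulrDr; apply: ler_wpM2l; last exact: parallel.
by rewrite exprM exprn_ge0 // sqr_ge0.
Qed.

End L2.

Section Op.
Variables (R : realType) (C : qhilbert R).

Lemma sq_le (a b : R) : 0 <= a -> 0 <= b -> a ^+ 2 <= b ^+ 2 -> a <= b.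
Proof. by move=> a0 b0; rewrite ler_pXn2r ?nnegrE. Qed.

Lemma opbound (Phic : nat -> C -> C) (P : C -> C) (rho : R) :
  (forall u, is_qop (Phic u)) -> 0 < rho -> rho < 1 ->
  (forall e, 0 < e -> exists N, forall n, (N <= n)%N ->
      op_close (qpseries_partial Phic (qreal rho) n) P e) ->
  exists K, 0 <= K /\ forall k c, qhnorm (Phic k c) <= K * rho^-1 ^+ k * qhnorm c.
Proof.
move=> hPhic r0 r1 hexp.
have [N HN] := hexp 1 ltr01.
have [Kf HK] := choice (fun k => proj2 (hPhic k)).
set M := \big[Order.max/0]_(j < N) `|Kf j|.
have M0 : 0 <= M by apply/bigmax_geP; left.
exists (2 + M); split; first by rewrite addr_ge0.
move=> k c.
have hr1 : 1 <= rho^-1 by rewrite invf_ge1 // ltW.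
have hpow : 1 <= rho^-1 ^+ k by exact: exprn_ege1.
have c0 := qhnorm_ge0 c.
case: (ltnP k N) => hk.
  apply: le_trans (HK k c) _; apply: ler_wpM2r => //.
  apply: le_trans (ler_norm (Kf k)) _.
  have : `|Kf k| <= M by apply/bigmax_geP; right; exists (Ordinal hk).
  move=> h; apply: le_trans (ler_peMr _ hpow); last by rewrite addr_ge0.
  lra.
set S := qpseries_partial Phic (qreal rho).
have d : S k.+1 c - S k c = qh_ract (Phic k c) (qreal (rho ^+ k)).
  by rewrite /S /qpseries_partial big_ord_recr /= addrAC subrr add0r qpow_real qh_real_central.
have b1 : qhnorm (S k.+1 c - P c) <= 1 * qhnorm c by exact: HN k.+1 (leqW hk) c.
have b2 : qhnorm (S k c - P c) <= 1 * qhnorm c by exact: HN k hk c.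
rewrite mul1r in b1 b2.
have e : S k.+1 c - S k c = (S k.+1 c - P c) - (S k c - P c).
  by rewrite opprB addrA subrK.
have hd : qhnorm (S k.+1 c - S k c) <= 2 * qhnorm c.
  apply: sq_le; [exact: qhnorm_ge0|by rewrite mulr_ge0|].
  rewrite e qhnorm_sqr; apply: le_trans (parallel _ _) _.
  rewrite -!qhnorm_sqr.
  have h1 : qhnorm (S k.+1 c - P c) ^+ 2 <= qhnorm c ^+ 2 by rewrite lerXn2r ?nnegrE ?qhnorm_ge0.
  have h2 : qhnorm (S k c - P c) ^+ 2 <= qhnorm c ^+ 2 by rewrite lerXn2r ?nnegrE ?qhnorm_ge0.
  rewrite exprMn; lra.
have rk : 0 < rho ^+ k by exact: exprn_gt0.
rewrite d qhnormZ ger0_norm in hd; last exact: ltW.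
have z0 : 0 <= rho^-1 ^+ k by rewrite exprn_ge0 // invr_ge0 ltW.
have -> : qhnorm (Phic k c) = rho^-1 ^+ k * (rho ^+ k * qhnorm (Phic k c)).
  by rewrite exprVn mulKf // gt_eqF.
apply: (@le_trans _ _ (rho^-1 ^+ k * (2 * qhnorm c))).
  exact: ler_wpM2l.
have h3 : 0 <= M * rho^-1 ^+ k * qhnorm c by rewrite !mulr_ge0.
have -> : (2 + M) * rho^-1 ^+ k * qhnorm c = rho^-1 ^+ k * (2 * qhnorm c) + M * rho^-1 ^+ k * qhnorm c by ring.
by rewrite lerDl.
Qed.

End Op.

Lemma zid (V : zmodType) (a b c d : V) : a - d = (a - b - (c - d)) + (b - d) + (c - d).
Proof. by rewrite addrAC subrK addrA subrK. Qed.

Lemma biadd_id (R : realType) (C : qhilbert R) (B : C -> C -> quat R)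
  (hl : forall p p' q, B (p - p') q = B p q - B p' q)
  (hr : forall p q q', B p (q - q') = B p q - B p q') p p0 q q0 :
  B p q - B p0 q0 = B (p - p0) (q - q0) + B (p - p0) q0 + B p0 (q - q0).
Proof. by rewrite !hl !hr; exact: zid. Qed.

Lemma qop_add (R : realType) (C : qhilbert R) (A : C -> C) :
  is_qop A -> forall x y, A (x - y) = A x - A y.
Proof.
move=> [hA _] x y.
have h : forall c d, A (c + d) = A c + A d.
  by move=> c d; have := hA c d (qone R); rewrite !qh_ract1.
by have := h (x - y) y; rewrite subrK => ->; rewrite addrK.
Qed.

Lemma qconjB (R : realType) (p q : quat R) : qconj (p - q) = qconj p - qconj q.
Proof. by rewrite qconjD qconjN. Qed.

Unset Implicit Arguments.

Theorem proposition6p2 (R : realType) (C : qhilbert R)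
  (hlip : forall (c d : C) (q : quat R),
     qh_ip c (qh_lact q d) = qh_ip (qh_lact (qconj q) c) d)
  (r r0 : R) (hr : 0 < r) (hrr0 : r < r0) (hr01 : r0 < 1)
  (Phi : quat R -> C -> C) (Phic : nat -> C -> C) (Phis : nat -> C -> C)
  (hPhic : forall u, is_qop (Phic u))
  (hadj : forall (u : nat) (c d : C), qh_ip (Phic u c) d = qh_ip c (Phis u d))
  (hPhiL : forall p : quat R, qabs p <= r0 -> is_qop (Phi p))
  (hexp : forall p : quat R, qabs p < r0 ->
     forall e : R, 0 < e -> exists N : nat, forall n : nat, (N <= n)%N ->
       op_close (qpseries_partial Phic p n) (Phi p) e)
  (hcont : forall p : quat R, qabs p <= r0 ->
     forall e : R, 0 < e -> exists d : R, 0 < d /\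
       forall p' : quat R, qabs p' <= r0 -> qabs (p' - p) < d ->
         op_close (Phi p') (Phi p) e) :
  (forall f g : nat -> C, l2r_mem r f -> l2r_mem r g ->
     cvgn (form_partial1 Phic f g) /\ cvgn (form_partial2 Phis f g)) /\
  (forall f0 g0 : nat -> C, l2r_mem r f0 -> l2r_mem r g0 ->
     forall e : R, 0 < e -> exists d : R, 0 < d /\
       forall f g : nat -> C, l2r_mem r f -> l2r_mem r g ->
         l2r_norm r (fun u => f u - f0 u) < d ->
         l2r_norm r (fun u => g u - g0 u) < d ->
         qabs (qform Phic Phis f g - qform Phic Phis f0 g0) < e).
Proof.
set rho := (r + r0) / 2.
have rho0 : 0 < rho by rewrite /rho; lra.
have rrho : r < rho by rewrite /rho; lra.
have rho1 : rho < 1 by rewrite /rho; lra.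
have r1 : r < 1 by lra.
have hq : qabs (qreal rho) < r0 by rewrite qabs_real gtr0_norm /rho //; lra.
have [K [K0 hK]] := opbound (P := Phi (qreal rho)) hPhic rho0 rho1 (hexp _ hq).
set q := r / rho.
have q0 : 0 < q by rewrite divr_gt0.
have q1 : q < 1 by rewrite ltr_pdivrMr // mul1r.
have hr1 : 1 <= rho^-1 by rewrite invf_ge1 // ltW.
set L := K * (r / (1 - r)) / (1 - q).
have L0 : 0 <= L by rewrite /L !mulr_ge0 // ?invr_ge0 ?subr_ge0 ?ltW.
have gen : forall (a b : nat -> C) (T : nat -> nat -> quat R), l2r_mem r a -> l2r_mem r b ->
    (forall v u, `|T v u| <= qhnorm (Phic (v - u)%N (a v)) * qhnorm (b u)) ->
    cvgn (fun n => \sum_(1 <= v < n) \sum_(1 <= u < v.+1) T v u) /\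
    `|limn (fun n => \sum_(1 <= v < n) \sum_(1 <= u < v.+1) T v u)|
       <= L * l2r_norm r a * l2r_norm r b.
  move=> a b T ha hb hT.
  have Fa := l2r_norm_ge0 r a; have Gb := l2r_norm_ge0 r b.
  have hTb : forall v u, (1 <= u)%N -> (u <= v)%N ->
      `|T v u| <= K * l2r_norm r a * l2r_norm r b * q ^+ v * r ^+ u.
  - move=> v u u1 uv; apply: le_trans (hT v u) _.
    have ha' := l2r_pt hr ha (leq_trans u1 uv).
    have hb' := l2r_pt hr hb u1.
    have hk := hK (v - u)%N (a v).
    have hpw : rho^-1 ^+ (v - u) <= rho^-1 ^+ v := ler_weXn2l hr1 (leq_subr u v).
    apply: (@le_trans _ _ ((K * rho^-1 ^+ v * (l2r_norm r a * r ^+ v)) * (l2r_norm r b * r ^+ u))).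
      apply: ler_pM => //; [exact: qhnorm_ge0|exact: qhnorm_ge0|].
      apply: le_trans hk _; apply: ler_pM => //.
      + by rewrite mulr_ge0 // exprn_ge0 // invr_ge0 ltW.
      + exact: qhnorm_ge0.
      + exact: ler_wpM2l.
    rewrite /q exprMn le_eqVlt; apply/orP; left; apply/eqP; ring.
  have [c1 c2] := rowseries (mulr_ge0 (mulr_ge0 K0 Fa) Gb) q0 q1 hr r1 hTb.
  split => //; apply: le_trans c2 _.
  by rewrite le_eqVlt; apply/orP; left; apply/eqP; rewrite /L; ring.
have G1 : forall a b : nat -> C, l2r_mem r a -> l2r_mem r b ->
    cvgn (form_partial1 Phic a b) /\
    `|limn (form_partial1 Phic a b)| <= L * l2r_norm r a * l2r_norm r b.
  move=> a b ha hb; apply: gen => // v u; exact: CS.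
have G2 : forall a b : nat -> C, l2r_mem r a -> l2r_mem r b ->
    cvgn (form_partial2 Phis a b) /\
    `|limn (form_partial2 Phis a b)| <= L * l2r_norm r b * l2r_norm r a.
  move=> a b ha hb.
  apply: (gen b a (fun v u => qh_ip (Phis (v - u)%N (a u)) (b v))) => // v u.
  by rewrite ipC -hadj qconj_norm; exact: CS.
split.
  by move=> f g hf hg; split; [exact: (G1 f g hf hg).1|exact: (G2 f g hf hg).1].
move=> f0 g0 hf0 hg0 e e0.
set F0 := l2r_norm r f0; set G0 := l2r_norm r g0.
have F00 : 0 <= F0 := l2r_norm_ge0 r f0.
have G00 : 0 <= G0 := l2r_norm_ge0 r g0.
set M := 4 * L * (1 + F0 + G0) + 1.
have M0 : 0 < M by rewrite /M; nra.
exists (Num.min 1 (e / M)); split.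
  by rewrite lt_min ltr01 divr_gt0.
move=> f g hf hg hdf hdg.
set fd := fun u => f u - f0 u; set gd := fun u => g u - g0 u.
have hfd : l2r_mem r fd := l2r_sub hf hf0.
have hgd : l2r_mem r gd := l2r_sub hg hg0.
move: hdf hdg; rewrite -/fd -/gd !lt_min => /andP[df1 dfe] /andP[dg1 dge].
have hl1 : forall k p p' y, qh_ip (Phic k (p - p')) y = qh_ip (Phic k p) y - qh_ip (Phic k p') y.
  by move=> k p p' y; rewrite qop_add // ipBl.
have hl2 : forall k p p' y, qh_ip (Phis k (p - p')) y = qh_ip (Phis k p) y - qh_ip (Phis k p') y.
  by move=> k p p' y; rewrite !(ipC _ y) -!hadj ipBr qconjB.
have E1 : limn (form_partial1 Phic f g) - limn (form_partial1 Phic f0 g0) =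
   limn (form_partial1 Phic fd gd) + limn (form_partial1 Phic fd g0) + limn (form_partial1 Phic f0 gd).
  rewrite -limB; [|exact: (G1 f g hf hg).1|exact: (G1 f0 g0 hf0 hg0).1].
  rewrite -limD; [|exact: (G1 _ _ hfd hgd).1|exact: (G1 _ _ hfd hg0).1].
  rewrite -limD; [|apply: is_cvgD; [exact: (G1 _ _ hfd hgd).1|exact: (G1 _ _ hfd hg0).1]|exact: (G1 _ _ hf0 hgd).1].
  congr (limn _); apply/funext => n /=.
  rewrite !fctE /form_partial1 -sumrB -!big_split /=; apply: eq_bigr => v _.
  rewrite -sumrB -!big_split /=; apply: eq_bigr => u _.
  by apply: (biadd_id (B := fun x y => qh_ip (Phic (v - u)%N x) y)) => [p p' y|p y y']; [exact: hl1|exact: ipBr].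
have E2 : limn (form_partial2 Phis f g) - limn (form_partial2 Phis f0 g0) =
   limn (form_partial2 Phis fd gd) + limn (form_partial2 Phis fd g0) + limn (form_partial2 Phis f0 gd).
  rewrite -limB; [|exact: (G2 f g hf hg).1|exact: (G2 f0 g0 hf0 hg0).1].
  rewrite -limD; [|exact: (G2 _ _ hfd hgd).1|exact: (G2 _ _ hfd hg0).1].
  rewrite -limD; [|apply: is_cvgD; [exact: (G2 _ _ hfd hgd).1|exact: (G2 _ _ hfd hg0).1]|exact: (G2 _ _ hf0 hgd).1].
  congr (limn _); apply/funext => n /=.
  rewrite !fctE /form_partial2 -sumrB -!big_split /=; apply: eq_bigr => v _.
  rewrite -sumrB -!big_split /=; apply: eq_bigr => u _.
  by apply: (biadd_id (B := fun x y => qh_ip (Phis (v - u)%N x) y)) => [p p' y|p y y']; [exact: hl2|exact: ipBr].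
have -> : qform Phic Phis f g - qform Phic Phis f0 g0 =
    (limn (form_partial1 Phic f g) - limn (form_partial1 Phic f0 g0)) +
    (limn (form_partial2 Phis f g) - limn (form_partial2 Phis f0 g0)).
  by rewrite /qform opprD addrACA.
rewrite E1 E2.
set a := l2r_norm r fd; set b := l2r_norm r gd.
have a0 : 0 <= a := l2r_norm_ge0 r fd.
have b0 : 0 <= b := l2r_norm_ge0 r gd.
have B1 := (G1 _ _ hfd hgd).2; have B2 := (G1 _ _ hfd hg0).2; have B3 := (G1 _ _ hf0 hgd).2.
have B4 := (G2 _ _ hfd hgd).2; have B5 := (G2 _ _ hfd hg0).2; have B6 := (G2 _ _ hf0 hgd).2.
rewrite -/a -/b -/F0 -/G0 in B1 B2 B3 B4 B5 B6.
apply: le_lt_trans (qabs_le _) _.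
set X1 := limn (form_partial1 Phic fd gd) in B1 *.
set X2 := limn (form_partial1 Phic fd g0) in B2 *.
set X3 := limn (form_partial1 Phic f0 gd) in B3 *.
set X4 := limn (form_partial2 Phis fd gd) in B4 *.
set X5 := limn (form_partial2 Phis fd g0) in B5 *.
set X6 := limn (form_partial2 Phis f0 gd) in B6 *.
have tri : `|X1 + X2 + X3 + (X4 + X5 + X6)| <=
    `|X1| + `|X2| + `|X3| + (`|X4| + `|X5| + `|X6|).
  by apply: le_trans (ler_normD _ _) _; apply: lerD; (apply: le_trans (ler_normD _ _) _;
     apply: lerD => //; exact: ler_normD).
set d := e / M in dfe dge.
have d0 : 0 < d by rewrite divr_gt0.
have eM : d * M = e by rewrite /d divfK // gt_eqF.
have p1 : L * a * b <= L * d.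
  by rewrite -mulrA ler_wpM2l // -[d]mulr1 ler_pM // ltW.
have p2 : L * a * G0 <= L * d * G0.
  by rewrite ler_wpM2r // ler_wpM2l // ltW.
have p3 : L * F0 * b <= L * F0 * d.
  by apply: ler_wpM2l; [rewrite mulr_ge0|exact: ltW].
have e4 : L * b * a = L * a * b by ring.
have e5 : L * G0 * a = L * a * G0 by ring.
have e6 : L * b * F0 = L * F0 * b by ring.
rewrite e4 in B4; rewrite e5 in B5; rewrite e6 in B6.
have fin : 4 * (L * d) + 4 * (L * d * G0) + 4 * (L * F0 * d) < e.
  rewrite -eM /M.
  have -> : d * (4 * L * (1 + F0 + G0) + 1) = 4 * (L * d) + 4 * (L * d * G0) + 4 * (L * F0 * d) + d by ring.
  by rewrite ltrDl.
lra.
Qed.
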